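(* Let $d\ge0$ and $a$ be integers and $r=-(a+d)$. The substitution $H(t)\mapsto \varphi(x):=x^dH(1-x)$ is a linear isomorphism from the space of formal Laurent series $H(t)$ over $\mathbb{K}$ around $t=1$ of pole order at most $d$ satisfying $H(t^{-1})=(-1)^dt^{-a}H(t)$ onto $\mathcal{F}_r$. Moreover, with respect to the Cauchy product of formal power series, $\mathcal{F}_r\cdot\mathcal{F}_s\subseteq\mathcal{F}_{r+s}$ for all $r,s\in\mathbb{Z}$ and $1\in\mathcal{F}_0$, so that $\mathcal{F}=\bigoplus_{r\in\mathbb{Z}}\mathcal{F}_r$ is a $\mathbb{Z}$-graded algebra.
   Context: $\mathbb{K}$ is one of $\mathbb{Q},\mathbb{R},\mathbb{C}$. For $r\in\mathbb{Z}$, $\mathcal{F}_r$ is the space of formal power series $\varphi(x)\in\mathbb{K}[[x]]$ satisfying $\varphi(x/(x-1))=(1-x)^r\varphi(x)$ (the composition is well defined since $x/(x-1)=-x-x^2-\cdots$ has zero constant term). $\mathcal{F}=\bigoplus_{r}\mathcal{F}_r$ is the $\mathbb{Z}$-graded vector space with homogeneous components $\mathcal{F}_r$, the product of homogeneous elements being the Cauchy product. The functional equation $H(t^{-1})=(-1)^dt^{-a}H(t)$ is understood as an identity of formal Laurent series in $u=1-t$ (with $t^{-1}=\sum_{j\ge0}u^j$, $1-t^{-1}=-u/(1-u)$, $t^{-a}=(1-u)^{-a}$). *)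

(* Defs.v *)
From mathcomp Require Import all_boot all_order all_algebra.
Set Implicit Arguments. Unset Strict Implicit. Unset Printing Implicit Defensive.
Import Order.TTheory GRing.Theory Num.Theory.
Local Open Scope ring_scope.

(* Formal power series over K are coefficient functions nat -> K.
   Formal Laurent series in u = 1 - t are coefficient functions int -> K
   (coefficient of u^k at index k). *)
Section Series.
Variable K : numFieldType.

Definition ps_one : nat -> K := fun n => (n == 0)%:R.

Definition ps_mul (f g : nat -> K) : nat -> K :=
  fun k => \sum_(i < k.+1) f i * g (k - i)%N.

Definition ps_pow (f : nat -> K) (n : nat) : nat -> K := iter n (ps_mul f) ps_one.

(* composition f(g), g with zero constant term: coefficient k only involves
   the powers g^n, n <= k *)
Definition ps_comp (f g : nat -> K) : nat -> K :=
  fun k => \sum_(n < k.+1) f n * ps_pow g n k.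

Definition ps_onemX : nat -> K := fun n => if n == 0%N then 1 else if n == 1%N then -1 else 0.
(* 1/(1 - x) = 1 + x + x^2 + ... *)
Definition ps_geom : nat -> K := fun _ => 1.
Definition ps_onemXz (r : int) : nat -> K :=
  match r with
  | Posz n => ps_pow ps_onemX n
  | Negz n => ps_pow ps_geom n.+1
  end.
(* x/(x-1) = -x - x^2 - ... *)
Definition ps_xdivxm1 : nat -> K := fun n => if n == 0%N then 0 else -1.

Definition inF (r : int) (phi : nat -> K) : Prop :=
  forall n, ps_comp phi ps_xdivxm1 n = ps_mul (ps_onemXz r) phi n.

Definition pole_le (d : nat) (H : int -> K) : Prop :=
  forall k : int, k < - d%:Z -> H k = 0.

(* coefficient of u^k in (1 - t^{-1})^m = (-u/(1-u))^m = (-1)^m u^m (1-u)^{-m} *)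
Definition wpow (m k : int) : K :=
  if (m <= k)%R then (-1) ^ m * ps_onemXz (- m) (absz (k - m)) else 0.

(* coefficient of u^k in H(t^{-1}) = sum_m H_m (1 - t^{-1})^m, for H of pole order <= d *)
Definition laurent_inv_t (d : nat) (H : int -> K) (k : int) : K :=
  \sum_(n < (absz (k + d%:Z)).+1) H (n%:Z - d%:Z) * wpow (n%:Z - d%:Z) k.

(* coefficient of u^k in (-1)^d t^{-a} H(t) = (-1)^d (1-u)^{-a} H, for H of pole order <= d *)
Definition laurent_rhs (d : nat) (a : int) (H : int -> K) (k : int) : K :=
  (-1) ^+ d * \sum_(n < (absz (k + d%:Z)).+1)
     (let m : int := (n%:Z - d%:Z)%R in
      H m * (if (m <= k)%R then ps_onemXz (- a) (absz (k - m)%R) else 0)).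

Definition inLS (d : nat) (a : int) (H : int -> K) : Prop :=
  pole_le d H /\ forall k, laurent_inv_t d H k = laurent_rhs d a H k.

(* phi(x) = x^d H(1-x): with t = 1 - x we have u = x *)
Definition phi_of (d : nat) (H : int -> K) : nat -> K :=
  fun m => H (m%:Z - d%:Z).

End Series.

(* Main.v *)
Require Import Defs.
From mathcomp Require Import all_boot all_order all_algebra.
From mathcomp Require Import ring lra zify.
Set Implicit Arguments. Unset Strict Implicit. Unset Printing Implicit Defensive.
Import Order.TTheory GRing.Theory Num.Theory.
Local Open Scope ring_scope.

Section Aux.
Variable K : numFieldType.
Implicit Types (f g h : nat -> K) (A B C P Q : {poly K}).

Definition agree N f P := forall i, (i < N)%N -> f i = P`_i.
Definition eqN N A B := forall i, (i < N)%N -> A`_i = B`_i.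

Lemma agree_eqN N f A B : agree N f A -> eqN N A B -> agree N f B.
Proof. by move=> h1 h2 i hi; rewrite h1 // h2. Qed.

Lemma eqN_refl N A : eqN N A A. Proof. by []. Qed.
Lemma eqN_sym N A B : eqN N A B -> eqN N B A. Proof. by move=> h i hi; rewrite h. Qed.
Lemma eqN_trans N A B C : eqN N A B -> eqN N B C -> eqN N A C.
Proof. by move=> h1 h2 i hi; rewrite h1 // h2. Qed.

Lemma eqN_mul N A A' B B' : eqN N A A' -> eqN N B B' -> eqN N (A * B) (A' * B').
Proof.
move=> h1 h2 i hi; rewrite !coefM; apply: eq_bigr => j _.
have hj : (j < N)%N by apply: leq_ltn_trans hi; rewrite -ltnS.
have hj' : (i - j < N)%N by apply: leq_ltn_trans hi; rewrite leq_subr.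
by rewrite h1 // h2.
Qed.

Lemma eqN_pow1 N A k : eqN N A 1 -> eqN N (A ^+ k) 1.
Proof.
move=> h; elim: k => [|k IH]; first by rewrite expr0.
by rewrite exprS -(mulr1 (1 : {poly K})); apply: eqN_mul.
Qed.

Lemma agree_mul N f g P Q : agree N f P -> agree N g Q -> agree N (ps_mul f g) (P * Q).
Proof.
move=> h1 h2 i hi; rewrite coefM /ps_mul; apply: eq_bigr => j _.
have hj : (j < N)%N by apply: leq_ltn_trans hi; rewrite -ltnS.
have hj' : (i - j < N)%N by apply: leq_ltn_trans hi; rewrite leq_subr.
by rewrite h1 // h2.
Qed.

Lemma agree_one N : agree N (@ps_one K) 1.
Proof. by move=> i _; rewrite coef1. Qed.

Lemma agree_pow N g Q n : agree N g Q -> agree N (ps_pow g n) (Q ^+ n).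
Proof.
move=> h; elim: n => [|n IH]; first by rewrite expr0; apply: agree_one.
rewrite exprS /ps_pow iterS; exact: agree_mul.
Qed.

Lemma agree_tr N f : agree N f (\poly_(i < N) f i).
Proof. by move=> i hi; rewrite coef_poly hi. Qed.

Lemma comp_sum N (c : nat -> K) Q :
  (\sum_(i < N) c i *: 'X^i) \Po Q = \sum_(i < N) c i *: Q ^+ i.
Proof.
elim: N => [|N IH]; first by rewrite !big_ord0 comp_poly0.
by rewrite !big_ord_recr /= comp_polyD IH comp_polyZ comp_Xn_poly.
Qed.

Lemma comp_tr N f g Q k : (k < N)%N -> N = k.+1 -> agree N g Q ->
  ps_comp f g k = ((\poly_(i < N) f i) \Po Q)`_k.
Proof.
move=> _ -> h; rewrite poly_def comp_sum coef_sum /ps_comp.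
apply: eq_bigr => n _; rewrite coefZ; congr (_ * _).
exact: (agree_pow n h (ltnSn k)).
Qed.

Lemma powQ_low Q n k : Q`_0 = 0 -> (k < n)%N -> (Q ^+ n)`_k = 0.
Proof.
move=> hQ; elim: n k => [|n IH] k //= hk.
rewrite exprS coefM; apply: big1 => j _.
case: j => [[|j]] hj /=; first by rewrite hQ mul0r.
rewrite IH ?mulr0 //; lia.
Qed.

Lemma comp_take N A Q : Q`_0 = 0 -> eqN N (A \Po Q) (take_poly N A \Po Q).
Proof.
move=> hQ i hi.
rewrite -{1}(poly_take_drop N A) comp_polyD comp_polyM comp_Xn_poly coefD.
rewrite [X in _ + X]coefM big1 ?addr0 // => j _.
rewrite powQ_low ?mulr0 //; case: j => j /=; lia.
Qed.

Lemma agree_comp N f g F Q : agree N f F -> agree N g Q -> Q`_0 = 0 ->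
  agree N (ps_comp f g) (F \Po Q).
Proof.
move=> hF hQ h0 i hi.
rewrite (comp_take (N:=i.+1) F h0) //.
have -> : take_poly i.+1 F = \poly_(j < i.+1) f j.
  by apply: eq_poly => j hj; rewrite hF //; lia.
apply: comp_tr => //.
by move=> j hj; apply: hQ; lia.
Qed.

Definition Gm N : {poly K} := \poly_(i < N) 1.

Lemma agree_onemX N : agree N (@ps_onemX K) (1 - 'X).
Proof.
move=> i _; rewrite coefB coef1 coefX /ps_onemX.
by case: i => [|[|i]] /=; rewrite ?subr0 ?sub0r ?subrr.
Qed.

Lemma agree_geom N : agree N (@ps_geom K) (Gm N).
Proof. by move=> i hi; rewrite coef_poly hi. Qed.

Lemma onemX_Gm N : eqN N ((1 - 'X) * Gm N) 1.
Proof.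
move=> i hi; rewrite mulrBl mul1r coefB coefXM coef1 !coef_poly hi.
case: i hi => [|i] hi /=; first by rewrite subr0.
by rewrite ifT ?subrr //; lia.
Qed.

Lemma OZ N (z : int) (p q : nat) : p%:Z - q%:Z = z ->
  agree N (@ps_onemXz K z) ((1 - 'X) ^+ p * Gm N ^+ q).
Proof.
case: z => n hz /=.
- have hp : p = (n + q)%N by lia.
  apply: (agree_eqN (agree_pow n (agree_onemX (N:=N)))).
  rewrite hp exprD -mulrA -exprMn.
  rewrite -[X in eqN _ X _]mulr1; apply: eqN_mul => //.
  by apply: eqN_sym; apply: eqN_pow1; apply: onemX_Gm.
- have hq : q = (p + n.+1)%N by lia.
  apply: (agree_eqN (agree_pow n.+1 (agree_geom (N:=N)))).
  rewrite hq exprD mulrA -exprMn.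
  rewrite -[X in eqN _ X _]mul1r; apply: eqN_mul => //.
  by apply: eqN_sym; apply: eqN_pow1; apply: onemX_Gm.
Qed.

Lemma exists_pq (z : int) : exists p q : nat, p%:Z - q%:Z = z.
Proof. case: z => n; [exists n, 0%N | exists 0%N, n.+1]; lia. Qed.

Definition Qx N : {poly K} := - ('X * Gm N).

Lemma agree_Qx N : agree N (@ps_xdivxm1 K) (Qx N).
Proof.
move=> i hi; rewrite coefN coefXM coef_poly /ps_xdivxm1.
by case: i hi => [|i] hi /=; rewrite ?oppr0 // ifT //; lia.
Qed.

Lemma Qx0 N : (Qx N)`_0 = 0.
Proof. by rewrite coefN coefXM /= oppr0. Qed.

Lemma sgn_nd (n d : nat) : (-1 : K) ^ (n%:Z - d%:Z) = (-1) ^+ d * (-1) ^+ n.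
Proof.
rewrite expfzDr ?oppr_eq0 ?oner_eq0 // -exprnN invr_sign mulrC //.
Qed.

Lemma inv_t_eq d (H : int -> K) (j : nat) :
  laurent_inv_t d H (j%:Z - d%:Z) =
  (-1) ^+ d * \sum_(n < j.+1) H (n%:Z - d%:Z) *
      ((-1) ^+ n * @ps_onemXz K (d%:Z - n%:Z) (j - n)%N).
Proof.
rewrite /laurent_inv_t subrK /= mulr_sumr; apply: eq_bigr => [[n hn]] _ /=.
rewrite /wpow lerD2r lez_nat -ltnS hn sgn_nd.
have -> : j%:Z - d%:Z - (n%:Z - d%:Z) = (j - n)%N by rewrite -subzn //; lia.
rewrite opprB /=; ring.
Qed.

Lemma rhs_eq d a (H : int -> K) (j : nat) :
  laurent_rhs d a H (j%:Z - d%:Z) =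
  (-1) ^+ d * \sum_(n < j.+1) H (n%:Z - d%:Z) * @ps_onemXz K (- a) (j - n)%N.
Proof.
rewrite /laurent_rhs subrK /=; congr (_ * _); apply: eq_bigr => [[n hn]] _ /=.
rewrite lerD2r lez_nat -ltnS hn.
have -> : j%:Z - d%:Z - (n%:Z - d%:Z) = (j - n)%N by rewrite -subzn //; lia.
by [].
Qed.

Lemma inv_t_low d (H : int -> K) k : k < - d%:Z -> laurent_inv_t d H k = 0.
Proof.
move=> hk; rewrite /laurent_inv_t; apply: big1 => n _.
rewrite /wpow ifF ?mulr0 //; apply/negbTE; rewrite -ltNge; lia.
Qed.

Lemma rhs_low d a (H : int -> K) k : k < - d%:Z -> laurent_rhs d a H k = 0.
Proof.
move=> hk; rewrite /laurent_rhs big1 ?mulr0 // => n _ /=.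
rewrite ifF ?mulr0 //; apply/negbTE; rewrite -ltNge; lia.
Qed.

Lemma sign_cancel (d : nat) (x y : K) : (-1) ^+ d * x = (-1) ^+ d * y -> x = y.
Proof.
move=> h; have := congr1 (fun t => (-1) ^+ d * t) h.
have e : (-1 : K) ^+ d * (-1) ^+ d = 1 by rewrite -exprMn mulrNN mulr1 expr1n.
by rewrite /= !mulrA e !mul1r.
Qed.

Lemma sum_trunc (N j : nat) (F : nat -> K) : (j < N)%N ->
  (forall n, (j < n)%N -> F n = 0) ->
  \sum_(n < N) F n = \sum_(n < j.+1) F n.
Proof.
move=> hj hF; rewrite (@big_ord_widen K 0 +%R _ _ F hj).
by rewrite [RHS]big_mkcond; apply: eq_bigr => i _; case: ifP => // /negbT; rewrite -leqNgt => /hF ->.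
Qed.

Lemma lhs_poly (N j d : nat) (phi : nat -> K) : (j < N)%N ->
  ((1 - 'X) ^+ d * ((\poly_(i < N) phi i) \Po Qx N))`_j =
  \sum_(n < j.+1) phi n * ((-1) ^+ n * @ps_onemXz K (d%:Z - n%:Z) (j - n)%N).
Proof.
move=> hj; rewrite poly_def comp_sum mulr_sumr coef_sum.
have eT : forall n, (1 - 'X) ^+ d * (phi n *: Qx N ^+ n) =
   phi n *: ((-1) ^+ n *: ('X^n * ((1 - 'X) ^+ d * Gm N ^+ n))).
  move=> n; rewrite /Qx (exprNn ('X * Gm N)) exprMn -!mul_polyC (rmorphXn (@polyC K)) rmorphN1; ring.
under eq_bigr => n _ do rewrite eT coefZ coefZ coefXnM.
rewrite (@sum_trunc N j (fun n => phi n * ((-1) ^+ n *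
      (if (j < n)%N then 0 else ((1 - 'X) ^+ d * Gm N ^+ n)`_(j - n))))) //;
  last by move=> n hn; rewrite ifT ?mulr0.
apply: eq_bigr => [[n hn]] _ /=; rewrite ifF; last by apply/negbTE; rewrite -leqNgt.
rewrite -(OZ (N:=N) (erefl (d%:Z - n%:Z))) //; lia.
Qed.

Lemma rhs_poly N j (phi c : nat -> K) O : (j < N)%N -> agree N c O ->
  (O * \poly_(i < N) phi i)`_j = \sum_(n < j.+1) phi n * c (j - n)%N.
Proof.
move=> hj hc; rewrite coefMr; apply: eq_bigr => [[n hn]] _ /=.
rewrite coef_poly ifT; last by lia.
rewrite -hc; last by lia.
by rewrite mulrC.
Qed.

Lemma part1 d a (H : int -> K) : inLS d a H -> inF (- (a + d%:Z)) (phi_of d H).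
Proof.
move=> [_ hL] j.
have [p [q hpq]] := exists_pq (- a).
pose phi := phi_of d H. pose P := \poly_(i < j.+1) phi i.
have e1 : eqN j.+1 ((1 - 'X) ^+ d * (P \Po Qx j.+1)) ((1 - 'X) ^+ p * Gm j.+1 ^+ q * P).
  move=> i hi; rewrite /P lhs_poly // (rhs_poly phi hi (OZ (N:=j.+1) hpq)).

  have := hL (i%:Z - d%:Z); rewrite inv_t_eq rhs_eq => /sign_cancel.
  by [].
have e2 : eqN j.+1 (P \Po Qx j.+1) ((1 - 'X) ^+ p * Gm j.+1 ^+ (q + d) * P).
  apply: (@eqN_trans _ _ (((1 - 'X) * Gm j.+1) ^+ d * (P \Po Qx j.+1))).
    rewrite -[X in eqN _ X _]mul1r; apply: eqN_mul => //.
    by apply: eqN_sym; apply: eqN_pow1; apply: onemX_Gm.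
  have -> : ((1 - 'X) * Gm j.+1) ^+ d * (P \Po Qx j.+1) =
     Gm j.+1 ^+ d * ((1 - 'X) ^+ d * (P \Po Qx j.+1)) by rewrite exprMn; ring.
  have -> : (1 - 'X) ^+ p * Gm j.+1 ^+ (q + d) * P =
     Gm j.+1 ^+ d * ((1 - 'X) ^+ p * Gm j.+1 ^+ q * P) by rewrite exprD; ring.
  by apply: eqN_mul.
rewrite (agree_comp (agree_tr (N:=j.+1) phi) (agree_Qx (N:=j.+1)) (Qx0 j.+1)) //.
rewrite (agree_mul (OZ (N:=j.+1) (p:=p) (q:=(q + d)%N) _) (agree_tr (N:=j.+1) phi)) //;
  last by lia.
exact: e2.
Qed.

Lemma part4 d a (f : nat -> K) : inF (- (a + d%:Z)) f ->
  exists H : int -> K, inLS d a H /\ forall m, phi_of d H m = f m.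
Proof.
move=> hf.
pose H := fun k : int => if (- d%:Z <= k) then f (absz (k + d%:Z)) else 0.
have hH : forall n : nat, H (n%:Z - d%:Z) = f n.
  move=> n; rewrite /H ifT; last by lia.
  by rewrite subrK.
exists H; split; last by move=> m; exact: hH.
split.
  by move=> k hk; rewrite /H ifF //; apply/negbTE; rewrite -ltNge.
move=> k; case: (ltP k (- d%:Z)) => hk.
  by rewrite inv_t_low // rhs_low.
have [j hj] : exists j : nat, k = j%:Z - d%:Z.
  exists (absz (k + d%:Z)); lia.
rewrite hj inv_t_eq rhs_eq.
under eq_bigr => n _ do rewrite hH.
under [in RHS]eq_bigr => n _ do rewrite hH.
congr (_ * _).
have [p [q hpq]] := exists_pq (- (a + d%:Z)).
rewrite -(lhs_poly (N:=j.+1)) //.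
rewrite -(rhs_poly f (ltnSn j) (OZ (N:=j.+1) (p:=(p + d)%N) (q:=q) _)); last by lia.
have ef : eqN j.+1 ((\poly_(i < j.+1) f i) \Po Qx j.+1)
    ((1 - 'X) ^+ p * Gm j.+1 ^+ q * \poly_(i < j.+1) f i).
  move=> i hi.
  rewrite -(agree_comp (agree_tr (N:=j.+1) f) (agree_Qx (N:=j.+1)) (Qx0 j.+1)) //.
  rewrite -(agree_mul (OZ (N:=j.+1) hpq) (agree_tr (N:=j.+1) f)) //.
have := eqN_mul (eqN_refl (N:=j.+1) ((1 - 'X) ^+ d)) ef (ltnSn j) => ->.
have -> : (1 - 'X) ^+ (p + d) * Gm j.+1 ^+ q * \poly_(i < j.+1) f i =
  (1 - 'X) ^+ d * ((1 - 'X) ^+ p * Gm j.+1 ^+ q * \poly_(i < j.+1) f i)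
  by rewrite exprD; ring.
by [].
Qed.

Lemma part5 (r s : int) (f g : nat -> K) :
  inF r f -> inF s g -> inF (r + s) (ps_mul f g).
Proof.
move=> hf hg k.
have [p1 [q1 h1]] := exists_pq r.
have [p2 [q2 h2]] := exists_pq s.
pose F := \poly_(i < k.+1) f i. pose G := \poly_(i < k.+1) g i.
have ef : eqN k.+1 (F \Po Qx k.+1) ((1 - 'X) ^+ p1 * Gm k.+1 ^+ q1 * F).
  move=> i hi.
  rewrite -(agree_comp (agree_tr (N:=k.+1) f) (agree_Qx (N:=k.+1)) (Qx0 k.+1)) //.
  rewrite -(agree_mul (OZ (N:=k.+1) h1) (agree_tr (N:=k.+1) f)) //.
have eg : eqN k.+1 (G \Po Qx k.+1) ((1 - 'X) ^+ p2 * Gm k.+1 ^+ q2 * G).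
  move=> i hi.
  rewrite -(agree_comp (agree_tr (N:=k.+1) g) (agree_Qx (N:=k.+1)) (Qx0 k.+1)) //.
  rewrite -(agree_mul (OZ (N:=k.+1) h2) (agree_tr (N:=k.+1) g)) //.
rewrite (agree_comp (agree_mul (agree_tr (N:=k.+1) f) (agree_tr (N:=k.+1) g))
   (agree_Qx (N:=k.+1)) (Qx0 k.+1)) // comp_polyM.
rewrite (agree_mul (OZ (N:=k.+1) (p:=(p1 + p2)%N) (q:=(q1 + q2)%N) _)
   (agree_mul (agree_tr (N:=k.+1) f) (agree_tr (N:=k.+1) g))) //; last by lia.
rewrite (eqN_mul ef eg (ltnSn k)).
have -> : (1 - 'X) ^+ (p1 + p2) * Gm k.+1 ^+ (q1 + q2) * (F * G) =
  (1 - 'X) ^+ p1 * Gm k.+1 ^+ q1 * F * ((1 - 'X) ^+ p2 * Gm k.+1 ^+ q2 * G)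
  by rewrite !exprD; ring.
by [].
Qed.

Lemma part6 : inF 0 (@ps_one K).
Proof.
move=> n.
rewrite (agree_comp (agree_one (N:=n.+1)) (agree_Qx (N:=n.+1)) (Qx0 n.+1)) //.
rewrite (agree_mul (OZ (N:=n.+1) (p:=0%N) (q:=0%N) erefl) (agree_one (N:=n.+1))) //.
by rewrite comp_polyC !expr0 !mul1r.
Qed.
End Aux.

Theorem proposition3p2 (K : numFieldType) :
  (forall (d : nat) (a : int),
     (forall H : int -> K, inLS d a H -> inF (- (a + d%:Z)) (phi_of d H)) /\
     (forall (c : K) (H1 H2 : int -> K) (m : nat),
        phi_of d (fun k => c * H1 k + H2 k) m = c * phi_of d H1 m + phi_of d H2 m) /\
     (forall H1 H2 : int -> K, inLS d a H1 -> inLS d a H2 ->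
        (forall m, phi_of d H1 m = phi_of d H2 m) -> forall k, H1 k = H2 k) /\
     (forall f : nat -> K, inF (- (a + d%:Z)) f ->
        exists H : int -> K, inLS d a H /\ forall m, phi_of d H m = f m)) /\
  (forall (r s : int) (f g : nat -> K), inF r f -> inF s g -> inF (r + s) (ps_mul f g)) /\
  inF 0 (@ps_one K).
Proof.
split; last split.
- move=> d a; split; first exact: part1.
  split; first by [].
  split; last exact: part4.
  move=> H1 H2 [h1 _] [h2 _] he k.
  case: (ltP k (- d%:Z)) => hk; first by rewrite h1 // h2.
  have [j hj] : exists j : nat, k = j%:Z - d%:Z by exists (absz (k + d%:Z)); lia.
  by rewrite hj; exact: he.
- exact: part5.
- exact: part6.
Qed.
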